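(* Let $\Gamma\in(0,1]$, $d_0\in(0,1)$, $r=1-\Gamma+\Gamma d_0$, and let $(b(t),d(t))$ be the solution of $\dot b=d$, $\dot d=\frac{\Gamma d}{1-\Gamma b}(1-b-d)-d$ with $b(0)=0$, $d(0)=d_0$; set $a(t)=b(t)+d(t)$. Then $a$ is strictly increasing on $[0,\infty)$ with $a(0)=d_0$ and $\lim_{t\to\infty}a(t)=d_0/r$; in particular no $t$ satisfies $a(t)\ge\beta$ when $\beta\ge d_0/r$. For every $\beta\in[d_0,d_0/r)$ and $t\ge0$, one has $a(t)\ge\beta$ if and only if $t\ge T(\beta,d_0,\Gamma)$, where $$T(\beta,d_0,\Gamma)=\frac1r\ln\left(\frac{1-r}{1-\frac{\beta}{d_0}r}\right).$$ *)

(* Defs.v *)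
From Stdlib Require Import Reals Lra.
Open Scope R_scope.

(* (b, d) solves  b' = d,  d' = Gamma d (1 - b - d) / (1 - Gamma b) - d
   on [0, +oo), with b(0) = 0, d(0) = d0.  The right-hand side is required
   to be well defined (1 - Gamma b(t) <> 0) along the solution. *)
Definition is_solution (Gamma d0 : R) (b d : R -> R) : Prop :=
  b 0 = 0 /\ d 0 = d0 /\
  (forall t, 0 <= t ->
     1 - Gamma * b t <> 0 /\
     derivable_pt_lim b t (d t) /\
     derivable_pt_lim d t
       (Gamma * d t / (1 - Gamma * b t) * (1 - b t - d t) - d t)).

Definition rr (Gamma d0 : R) : R := 1 - Gamma + Gamma * d0.

Definition Tbeta (beta d0 Gamma : R) : R :=
  let r := rr Gamma d0 in
  / r * ln ((1 - r) / (1 - beta / d0 * r)).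

(* Main.v *)
Require Import Defs.
From Stdlib Require Import Reals Lra.
Open Scope R_scope.

Lemma const_of_zero (f : R -> R) :
  (forall t, 0 <= t -> derivable_pt_lim f t 0) -> forall t, 0 <= t -> f t = f 0.
Proof.
  intros H t Ht. destruct (Req_dec t 0) as [->|Hn]; [reflexivity|].
  destruct (MVT_cor2 f (fun _ => 0) 0 t) as [c [Hc _]]; [lra| |].
  - intros c Hc; apply H; lra.
  - lra.
Qed.

Lemma dlim_eq f x l l' : derivable_pt_lim f x l -> l = l' -> derivable_pt_lim f x l'.
Proof. intros H ->; exact H. Qed.

Lemma exp_le_iff x y : x <= y <-> exp x <= exp y.
Proof.
  split; intro H.
  - destruct (Req_dec x y) as [->|]; [lra|]. left; apply exp_increasing; lra.
  - destruct (Rle_lt_dec x y) as [|Hl]; [auto|].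
    apply exp_increasing in Hl; lra.
Qed.

Theorem theorem5 (Gamma d0 : R) (b d : R -> R) :
  0 < Gamma <= 1 -> 0 < d0 < 1 ->
  is_solution Gamma d0 b d ->
  let a := fun t => b t + d t in
  let r := rr Gamma d0 in
  (forall s t, 0 <= s -> s < t -> a s < a t) /\
  a 0 = d0 /\
  (forall eps, 0 < eps -> exists M, forall t, M <= t -> Rabs (a t - d0 / r) < eps) /\
  (forall beta, d0 / r <= beta -> forall t, 0 <= t -> ~ (beta <= a t)) /\
  (forall beta, d0 <= beta < d0 / r -> forall t, 0 <= t ->
     (beta <= a t <-> Tbeta beta d0 Gamma <= t)).
Proof.
  intros HG Hd [Hb0 [Hd0 Hs]] a r.
  assert (Hr : 0 < r /\ r < 1) by (unfold r, rr; nra).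
  assert (Hinv : forall t, 0 <= t -> 1 - (b t + d t) = (1 - d0) * (1 - Gamma * b t)).
  { set (F := fun t => (1 - (b t + d t)) / (1 - Gamma * b t)).
    assert (HF : forall t, 0 <= t -> derivable_pt_lim F t 0).
    { intros t Ht. destruct (Hs t Ht) as [Hx [Hbd Hdd]].
      assert (H1 : derivable_pt_lim (fct_cte 1 - (b + d))%F t
        (0 - (d t + (Gamma * d t / (1 - Gamma * b t) * (1 - b t - d t) - d t)))).
      { apply derivable_pt_lim_minus; [apply derivable_pt_lim_const|].
        apply derivable_pt_lim_plus; auto. }
      assert (H2 : derivable_pt_lim (fct_cte 1 - mult_real_fct Gamma b)%F t
        (0 - Gamma * d t)).
      { apply derivable_pt_lim_minus; [apply derivable_pt_lim_const|].
        apply derivable_pt_lim_scal; auto. }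
      pose proof (derivable_pt_lim_div _ _ _ _ _ H1 H2) as H3.
      unfold minus_fct, plus_fct, fct_cte, mult_real_fct in H3.
      specialize (H3 Hx).
      unfold F. eapply dlim_eq; [exact H3|].
      unfold Rsqr; field; auto. }
    intros t Ht. pose proof (const_of_zero F HF t Ht) as E.
    unfold F in E. rewrite Hb0, Hd0 in E.
    destruct (Hs t Ht) as [Hx _].
    replace (1 - Gamma * 0) with 1 in E by ring.
    apply (Rmult_eq_reg_r (/ (1 - Gamma * b t))); [|apply Rinv_neq_0_compat; auto].
    unfold Rdiv in E; rewrite E. field; auto. }
  assert (Hbc : forall t, 0 <= t -> b t = d0 / r * (1 - exp (- (r * t)))).
  { set (H := fun t => (b t - d0 / r) * exp (r * t)).
    assert (HH : forall t, 0 <= t -> derivable_pt_lim H t 0).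
    { intros t Ht. destruct (Hs t Ht) as [Hx [Hbd Hdd]].
      assert (He : derivable_pt_lim (comp exp (mult_real_fct r id)) t (exp (r * t) * (r * 1))).
      { apply derivable_pt_lim_comp.
        - apply derivable_pt_lim_scal, derivable_pt_lim_id.
        - apply derivable_pt_lim_exp. }
      assert (Hm : derivable_pt_lim (b - fct_cte (d0 / r))%F t (d t - 0)).
      { apply derivable_pt_lim_minus; auto. apply derivable_pt_lim_const. }
      pose proof (derivable_pt_lim_mult _ _ _ _ _ Hm He) as H3.
      unfold mult_fct, minus_fct, fct_cte, comp, mult_real_fct, id in H3.
      unfold H. eapply dlim_eq; [exact H3|].
      pose proof (Hinv t Ht) as Hi.
      assert (Hdt : d t = d0 - r * b t) by (unfold r, rr; nra).
      rewrite Hdt. field. lra. }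
    intros t Ht. pose proof (const_of_zero H HH t Ht) as E.
    unfold H in E. rewrite Hb0 in E. replace (r * 0) with 0 in E by ring.
    rewrite exp_0 in E. rewrite exp_Ropp.
    pose proof (exp_pos (r * t)).
    apply (Rmult_eq_reg_r (exp (r * t))); [|lra].
    field_simplify; [|lra].
    replace (b t * exp (r * t)) with ((b t - d0 / r) * exp (r * t) + d0 / r * exp (r * t)) by ring.
    rewrite E. field. lra. }
  assert (Hac : forall t, 0 <= t -> a t = d0 / r * (1 - (1 - r) * exp (- (r * t)))).
  { intros t Ht. unfold a. pose proof (Hinv t Ht) as Hi. pose proof (Hbc t Ht) as Hb.
    assert (Hat : b t + d t = d0 + (1 - r) * b t) by (unfold r, rr in *; nra).
    rewrite Hat, Hb. field. lra. }
  assert (Hdr : 0 < d0 / r) by (apply Rdiv_lt_0_compat; lra).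
  split; [|split; [|split; [|split]]].
  - intros s t Hs0 Hst. rewrite !Hac by lra.
    assert (exp (- (r * t)) < exp (- (r * s))) by (apply exp_increasing; nra).
    apply Rmult_lt_compat_l; auto. nra.
  - unfold a; rewrite Hb0, Hd0; ring.
  - intros eps Heps.
    set (K := d0 * (1 - r) / (eps * r)).
    assert (HK : 0 < K) by (unfold K; apply Rdiv_lt_0_compat; nra).
    exists (Rmax 0 (ln K / r + 1)). intros t Ht.
    assert (Ht0 : 0 <= t) by (eapply Rle_trans; [apply Rmax_l|exact Ht]).
    assert (Ht1 : ln K / r + 1 <= t) by (eapply Rle_trans; [apply Rmax_r|exact Ht]).
    rewrite Hac by lra.
    assert (Hlt : exp (- (r * t)) < / K).
    { rewrite <- (exp_ln K) by auto. rewrite <- exp_Ropp. apply exp_increasing.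
      assert (ln K < r * t).
      { assert (ln K / r * r < t * r) by (apply Rmult_lt_compat_r; lra).
        replace (ln K / r * r) with (ln K) in H by (field; lra). lra. }
      lra. }
    pose proof (exp_pos (- (r * t))).
    replace (d0 / r * (1 - (1 - r) * exp (- (r * t))) - d0 / r)
      with (- (d0 / r * (1 - r) * exp (- (r * t)))) by ring.
    rewrite Rabs_Ropp, Rabs_right.
    2:{ apply Rle_ge. apply Rmult_le_pos; [apply Rmult_le_pos|]; lra. }
    apply Rlt_le_trans with (d0 / r * (1 - r) * / K).
    + apply Rmult_lt_compat_l; auto. apply Rmult_lt_0_compat; lra.
    + unfold K. right. field. repeat split; lra.
  - intros beta Hbeta t Ht Hle. rewrite Hac in Hle by auto.
    pose proof (exp_pos (- (r * t))).
    assert (0 < d0 / r * ((1 - r) * exp (- (r * t)))) by (apply Rmult_lt_0_compat; nra).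
    nra.
  - intros beta [Hb1 Hb2] t Ht. rewrite Hac by auto.
    set (c := 1 - beta / d0 * r).
    assert (Hc : 0 < c).
    { unfold c. assert (beta * r < d0).
      { apply (Rmult_lt_compat_r r) in Hb2; [|lra].
        replace (d0 / r * r) with d0 in Hb2 by (field; lra). lra. }
      replace (beta / d0 * r) with (beta * r / d0) by (field; lra).
      assert (beta * r / d0 < 1); [|lra].
      apply (Rmult_lt_reg_r d0); [lra|]. replace (beta * r / d0 * d0) with (beta * r) by (field; lra). lra. }
    unfold Tbeta. fold r. fold c.
    unfold Rdiv at 2. rewrite ln_mult by (try apply Rinv_0_lt_compat; lra).
    rewrite ln_Rinv by lra.
    transitivity ((1 - r) * exp (- (r * t)) <= c).
    { unfold c. split; intro Hh.
      - apply (Rmult_le_compat_l (r / d0)) in Hh; [|left; apply Rdiv_lt_0_compat; lra].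
        replace (r / d0 * (d0 / r * (1 - (1 - r) * exp (- (r * t)))))
          with (1 - (1 - r) * exp (- (r * t))) in Hh by (field; lra).
        replace (r / d0 * beta) with (beta / d0 * r) in Hh by (field; lra). lra.
      - apply (Rmult_le_compat_l (d0 / r)) in Hh; [|lra].
        replace (d0 / r * (1 - beta / d0 * r)) with (d0 / r - beta) in Hh by (field; lra).
        lra. }
    assert (E1 : (1 - r) * exp (- (r * t)) = exp (ln (1 - r) + - (r*t))) by (rewrite exp_plus, exp_ln; lra).
    rewrite E1.
    transitivity (ln (1 - r) + - (r*t) <= ln c).
    { split; intro Hh.
      - apply exp_le_iff. rewrite exp_ln; lra.
      - apply Rle_trans with (exp (ln c)); [apply (proj1 (exp_le_iff _ _)); exact Hh|rewrite exp_ln; lra]. }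
    split; intro Hh.
    + apply (Rmult_le_reg_l r); [lra|]. replace (r * (/ r * (ln (1 - r) + - ln c))) with
        (ln (1 - r) - ln c) by (field; lra). lra.
    + apply (Rmult_le_compat_l r) in Hh; [|lra].
      replace (r * (/ r * (ln (1 - r) + - ln c))) with (ln (1 - r) - ln c) in Hh by (field; lra). lra.
Qed.
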